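(* Let $p,\mu_b,\mu_\nu,\theta\in(0,1)$ and let $N_0\ge 2$ and $N_1\ge N_0+2$ be integers. Consider the discrete-time Markov chain on the finite state space $\Omega_{ob}=\{(n,0):0\le n\le N_0+1\}\cup\{(n,1):1\le n\le N_1+1\}$ whose one-step transition probabilities are listed in the context (all unlisted transitions have probability $0$). Let $\alpha=\frac{p\bar\mu_b}{\bar p\mu_b}$, and let $x_1^*,x_2^*,\Delta$ be as defined in the context. Assume $\alpha<1$, $\Delta\neq 0$ and $\alpha\notin\{x_1^*,x_2^*\}$. Then the chain has a unique stationary distribution $\pi=(\pi^+_{nj})_{(n,j)\in\Omega_{ob}}$ (i.e. $\pi\ge0$, $\sum\pi^+_{nj}=1$, $\pi P=\pi$), and, writing $c=\pi^+_{11}$ (which is the constant making the total mass equal to $1$) and defining, with $H=1/\Delta$, $$\tilde A_1=-H\bar p\bar\theta\mu_b\,c\,b(x_2^* ),\qquad \tilde B_1=H\bar p\bar\theta\mu_b\,c\,b(x_1^* ),$$ $$\tilde C_1=\frac{\theta\tilde A_1[(x_1^*-1)(\bar p\mu_\nu x_1^*-p\bar\mu_\nu)+x_1^*]}{(x_1^*-1)(p\bar\mu_b-\bar p\mu_b x_1^* )},\qquad \tilde D_1=\frac{\theta\tilde B_1[(x_2^*-1)(\bar p\mu_\nu x_2^*-p\bar\mu_\nu)+x_2^*]}{(1-x_2^* )(\bar p\mu_b x_2^*-p\bar\mu_b)},$$ $$\tilde A_2=\frac{\bar p\mu_b\bar\theta c-\bar p\mu_b(\tilde C_1x_1^{*2}+\tilde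 D_1x_2^{*2}-\alpha\tilde C_1x_1^*-\alpha\tilde D_1x_2^* )-\theta\bar p\mu_\nu(\tilde A_1x_1^{*2}+\tilde B_1x_2^{*2})-\theta(1-p\bar\mu_\nu)(\tilde A_1x_1^*+\tilde B_1x_2^* )}{\bar p\mu_b(1-\alpha)},$$ $$\tilde B_2=\frac{\bar p\mu_b(\tilde C_1x_1^{*2}+\tilde D_1x_2^{*2}-\tilde C_1x_1^*-\tilde D_1x_2^* )+\theta\bar p\mu_\nu(\tilde A_1x_1^{*2}+\tilde B_1x_2^{*2})+\theta(1-p\bar\mu_\nu)(\tilde A_1x_1^*+\tilde B_1x_2^* )-(p\bar\mu_b-\bar p\mu_b\theta)c}{\bar p\mu_b\alpha(1-\alpha)},$$ the stationary probabilities are \begin{align*} \pi^+_{00}&=\tfrac{\bar p\mu_\nu}{p}(\tilde A_1x_1^*+\tilde B_1x_2^* )+\tfrac{\bar p\mu_b}{p}c,\\ \pi^+_{n0}&=\tilde A_1x_1^{*n}+\tilde B_1x_2^{*n},\quad 1\le n\le N_0,\\ \pi^+_{N_0+1,0}&=\tfrac{p\bar\theta\bar\mu_\nu}{1-\bar\theta\bar\mu_\nu}(\tilde A_1x_1^{*N_0}+\tilde B_1x_2^{*N_0}),\\ \pi^+_{n1}&=\tilde A_2+\tilde B_2\alpha^n+\tilde C_1x_1^{*n}+\tilde D_1x_2^{*n},\quad 1\le n\le N_0,\\ \pi^+_{N_0+1,1}&=\alpha(\tilde A_2+\tilde B_2\alpha^{N_0}+\tilde C_1x_1^{*N_0}+\tilde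 D_1x_2^{*N_0})+\tfrac{p\theta\bar\mu_\nu}{\bar p\mu_b(1-\bar\theta\bar\mu_\nu)}(\tilde A_1x_1^{*N_0}+\tilde B_1x_2^{*N_0}),\\ \pi^+_{n1}&=\alpha^{\,n-N_0-1}\pi^+_{N_0+1,1},\quad N_0+2\le n\le N_1,\\ \pi^+_{N_1+1,1}&=\bar p\,\alpha^{N_1-N_0}\pi^+_{N_0+1,1}. \end{align*}
   Context: For $x\in[0,1]$ write $\bar x=1-x$. Set $s_\nu=1-p\bar\mu_\nu-\bar p\mu_\nu$ and $s_b=1-p\bar\mu_b-\bar p\mu_b$. The transition probabilities of the chain (observable Geo/Geo/1 queue with multiple working vacations under threshold policy $(N_0,N_1)$; state $(n,j)$ = number in system $n$, server in working vacation $j=0$ or regular busy period $j=1$) are: From $(0,0)$: to $(0,0)$ w.p. $\bar p$; to $(1,0)$ w.p. $p\bar\theta$; to $(1,1)$ w.p. $p\theta$. From $(1,0)$: to $(0,0)$ w.p. $\bar p\mu_\nu$; to $(1,0)$ w.p. $\bar\theta s_\nu$; to $(1,1)$ w.p. $\theta s_\nu$; to $(2,0)$ w.p. $p\bar\theta\bar\mu_\nu$; to $(2,1)$ w.p. $p\theta\bar\mu_\nu$. From $(n,0)$, $2\le n\le N_0$: to $(n-1,0)$ w.p. $\bar p\bar\theta\mu_\nu$; to $(n-1,1)$ w.p. $\bar p\theta\mu_\nu$; to $(n,0)$ w.p. $\bar\theta s_\nu$; to $(n,1)$ w.p. $\theta s_\nu$; to $(n+1,0)$ w.p. $p\bar\theta\bar\mu_\nu$;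 to $(n+1,1)$ w.p. $p\theta\bar\mu_\nu$. From $(N_0+1,0)$: to $(N_0,0)$ w.p. $\bar\theta\mu_\nu$; to $(N_0,1)$ w.p. $\theta\mu_\nu$; to $(N_0+1,0)$ w.p. $\bar\theta\bar\mu_\nu$; to $(N_0+1,1)$ w.p. $\theta\bar\mu_\nu$. From $(1,1)$: to $(0,0)$ w.p. $\bar p\mu_b$; to $(1,1)$ w.p. $s_b$; to $(2,1)$ w.p. $p\bar\mu_b$. From $(n,1)$, $2\le n\le N_1$: to $(n-1,1)$ w.p. $\bar p\mu_b$; to $(n,1)$ w.p. $s_b$; to $(n+1,1)$ w.p. $p\bar\mu_b$. From $(N_1+1,1)$: to $(N_1,1)$ w.p. $\mu_b$; to $(N_1+1,1)$ w.p. $\bar\mu_b$. Constants: $\gamma=\theta+\bar\theta p\bar\mu_\nu+\bar\theta\bar p\mu_\nu$; $x^*_{1,2}=\dfrac{\gamma\pm\sqrt{\gamma^2-4\bar\theta^2p\bar p\mu_\nu\bar\mu_\nu}}{2\bar\theta\bar p\mu_\nu}$ (the two roots of $\bar\theta\bar p\mu_\nu x^2-\gamma x+\bar\theta p\bar\mu_\nu=0$, with $+$ for $x_1^*$); $\kappa=\theta+\bar\theta p\bar\mu_\nu+\bar\theta\bar p\mu_\nu-\theta\bar\theta\bar\mu_\nu-\bar\theta^2\bar\mu_\nu^2p-\bar\theta^2\bar\mu_\nu\mu_\nu$; $a(x)=\theta x+\bar\theta p\bar\mu_\nu x-\bar\theta\bar p\mu_\nu x^2$; $b(x)=\kappa x^{N_0}-p\bar\theta\bar\mu_\nu(1-\bar\theta\bar\mu_\nu)x^{N_0-1}$;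 $\Delta=a(x_2^* )\,b(x_1^* )-a(x_1^* )\,b(x_2^* )$. *)

(* Defs.v *)
From Stdlib Require Import Reals Lra Lia Arith List.
Open Scope R_scope.

Definition bar (x : R) : R := 1 - x.

Definition s_nu (p muv : R) : R := 1 - p * bar muv - bar p * muv.
Definition s_b (p mub : R) : R := 1 - p * bar mub - bar p * mub.

Definition trans (p mub muv th : R) (N0 N1 : nat) (n j n' j' : nat) : R :=
  let sv := s_nu p muv in
  let sb := s_b p mub in
  let is a b := ((n' =? a)%nat && (j' =? b)%nat)%bool in
  if (j =? 0)%nat then
    if (n =? 0)%nat then
      if is 0%nat 0%nat then bar p
      else if is 1%nat 0%nat then p * bar th
      else if is 1%nat 1%nat then p * th
      else 0
    else if (n =? 1)%nat then
      if is 0%nat 0%nat then bar p * muv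
      else if is 1%nat 0%nat then bar th * sv
      else if is 1%nat 1%nat then th * sv
      else if is 2%nat 0%nat then p * bar th * bar muv
      else if is 2%nat 1%nat then p * th * bar muv
      else 0
    else if (n <=? N0)%nat then
      if is (n - 1)%nat 0%nat then bar p * bar th * muv
      else if is (n - 1)%nat 1%nat then bar p * th * muv
      else if is n 0%nat then bar th * sv
      else if is n 1%nat then th * sv
      else if is (n + 1)%nat 0%nat then p * bar th * bar muv
      else if is (n + 1)%nat 1%nat then p * th * bar muv
      else 0
    else if (n =? N0 + 1)%nat then
      if is N0 0%nat then bar th * muv
      else if is N0 1%nat then th * muv
      else if is (N0 + 1)%nat 0%nat then bar th * bar muv
      else if is (N0 + 1)%nat 1%nat then th * bar muv
      else 0
    else 0
  else if (j =? 1)%nat then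
    if (n =? 1)%nat then
      if is 0%nat 0%nat then bar p * mub
      else if is 1%nat 1%nat then sb
      else if is 2%nat 1%nat then p * bar mub
      else 0
    else if ((2 <=? n)%nat && (n <=? N1)%nat)%bool then
      if is (n - 1)%nat 1%nat then bar p * mub
      else if is n 1%nat then sb
      else if is (n + 1)%nat 1%nat then p * bar mub
      else 0
    else if (n =? N1 + 1)%nat then
      if is N1 1%nat then mub
      else if is (N1 + 1)%nat 1%nat then bar mub
      else 0
    else 0
  else 0.

Definition inOmega (N0 N1 : nat) (n j : nat) : Prop :=
  (j = 0%nat /\ (n <= N0 + 1)%nat) \/ (j = 1%nat /\ (1 <= n)%nat /\ (n <= N1 + 1)%nat).

Definition omega (N0 N1 : nat) : list (nat * nat) :=
  map (fun n => (n, 0%nat)) (seq 0 (N0 + 2)) ++ map (fun n => (n, 1%nat)) (seq 1 (N1 + 1)).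

Definition sum_omega (N0 N1 : nat) (f : nat -> nat -> R) : R :=
  fold_right Rplus 0 (map (fun s => f (fst s) (snd s)) (omega N0 N1)).

Definition stationary (p mub muv th : R) (N0 N1 : nat) (pi : nat -> nat -> R) : Prop :=
  (forall n j, inOmega N0 N1 n j -> 0 <= pi n j) /\
  sum_omega N0 N1 pi = 1 /\
  (forall n' j', inOmega N0 N1 n' j' ->
     sum_omega N0 N1 (fun n j => pi n j * trans p mub muv th N0 N1 n j n' j') = pi n' j').

Definition alpha (p mub : R) : R := p * bar mub / (bar p * mub).
Definition gam (p muv th : R) : R := th + bar th * p * bar muv + bar th * bar p * muv.
Definition disc (p muv th : R) : R :=
  gam p muv th ^ 2 - 4 * bar th ^ 2 * p * bar p * muv * bar muv.
Definition x1star (p muv th : R) : R :=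
  (gam p muv th + sqrt (disc p muv th)) / (2 * bar th * bar p * muv).
Definition x2star (p muv th : R) : R :=
  (gam p muv th - sqrt (disc p muv th)) / (2 * bar th * bar p * muv).
Definition kappa (p muv th : R) : R :=
  th + bar th * p * bar muv + bar th * bar p * muv - th * bar th * bar muv
  - bar th ^ 2 * bar muv ^ 2 * p - bar th ^ 2 * bar muv * muv.
Definition afun (p muv th x : R) : R :=
  th * x + bar th * p * bar muv * x - bar th * bar p * muv * x ^ 2.
Definition bfun (p muv th : R) (N0 : nat) (x : R) : R :=
  kappa p muv th * x ^ N0 - p * bar th * bar muv * (1 - bar th * bar muv) * x ^ (N0 - 1).
Definition DeltaQ (p muv th : R) (N0 : nat) : R :=
  afun p muv th (x2star p muv th) * bfun p muv th N0 (x1star p muv th)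
  - afun p muv th (x1star p muv th) * bfun p muv th N0 (x2star p muv th).

Section Coeffs.
Variables (p mub muv th : R) (N0 : nat) (c : R).
Let x1 := x1star p muv th.
Let x2 := x2star p muv th.
Let al := alpha p mub.
Let H := 1 / DeltaQ p muv th N0.

Definition tA1 : R := - H * bar p * bar th * mub * c * bfun p muv th N0 x2.
Definition tB1 : R := H * bar p * bar th * mub * c * bfun p muv th N0 x1.
Definition tC1 : R :=
  th * tA1 * ((x1 - 1) * (bar p * muv * x1 - p * bar muv) + x1)
  / ((x1 - 1) * (p * bar mub - bar p * mub * x1)).
Definition tD1 : R :=
  th * tB1 * ((x2 - 1) * (bar p * muv * x2 - p * bar muv) + x2)
  / ((1 - x2) * (bar p * mub * x2 - p * bar mub)).
Definition tA2 : R :=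
  (bar p * mub * bar th * c
   - bar p * mub * (tC1 * x1 ^ 2 + tD1 * x2 ^ 2 - al * tC1 * x1 - al * tD1 * x2)
   - th * bar p * muv * (tA1 * x1 ^ 2 + tB1 * x2 ^ 2)
   - th * (1 - p * bar muv) * (tA1 * x1 + tB1 * x2))
  / (bar p * mub * (1 - al)).
Definition tB2 : R :=
  (bar p * mub * (tC1 * x1 ^ 2 + tD1 * x2 ^ 2 - tC1 * x1 - tD1 * x2)
   + th * bar p * muv * (tA1 * x1 ^ 2 + tB1 * x2 ^ 2)
   + th * (1 - p * bar muv) * (tA1 * x1 + tB1 * x2)
   - (p * bar mub - bar p * mub * th) * c)
  / (bar p * mub * al * (1 - al)).

Definition piN0p1_1 : R :=
  al * (tA2 + tB2 * al ^ N0 + tC1 * x1 ^ N0 + tD1 * x2 ^ N0)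
  + p * th * bar muv / (bar p * mub * (1 - bar th * bar muv))
    * (tA1 * x1 ^ N0 + tB1 * x2 ^ N0).

Definition closed_form (N1 : nat) (n j : nat) : R :=
  if (j =? 0)%nat then
    if (n =? 0)%nat then
      bar p * muv / p * (tA1 * x1 + tB1 * x2) + bar p * mub / p * c
    else if (n <=? N0)%nat then tA1 * x1 ^ n + tB1 * x2 ^ n
    else if (n =? N0 + 1)%nat then
      p * bar th * bar muv / (1 - bar th * bar muv) * (tA1 * x1 ^ N0 + tB1 * x2 ^ N0)
    else 0
  else if (j =? 1)%nat then
    if ((1 <=? n)%nat && (n <=? N0)%nat)%bool then
      tA2 + tB2 * al ^ n + tC1 * x1 ^ n + tD1 * x2 ^ n
    else if (n =? N0 + 1)%nat then piN0p1_1
    else if ((N0 + 2 <=? n)%nat && (n <=? N1)%nat)%bool then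
      al ^ (n - N0 - 1) * piN0p1_1
    else if (n =? N1 + 1)%nat then bar p * al ^ (N1 - N0) * piN0p1_1
    else 0
  else 0.
End Coeffs.

(* Main.v *)
Require Import Defs.
From Stdlib Require Import Reals.
From Stdlib Require Import Lra Lia Arith List Field.
Import ListNotations.
Open Scope R_scope.

Definition sumseq (a L : nat) (g : nat -> R) : R := fold_right Rplus 0 (map g (seq a L)).
Definition ind (k : nat) (c : R) (n : nat) : R := if (n =? k)%nat then c else 0.
Definition indl (l : list (nat * R)) (n : nat) : R :=
  fold_right (fun kc acc => ind (fst kc) (snd kc) n + acc) 0 l.
Definition lsum (l : list (nat * R)) : R := fold_right (fun kc acc => snd kc + acc) 0 l.

Lemma sumseq_S a L g : sumseq a (S L) g = g a + sumseq (S a) L g.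
Proof. reflexivity. Qed.

Lemma sumseq_ext a L g h : (forall n, (a <= n < a + L)%nat -> g n = h n) ->
  sumseq a L g = sumseq a L h.
Proof.
  revert a; induction L; intros a H; [reflexivity|].
  rewrite !sumseq_S. f_equal; [apply H; lia|]. apply IHL; intros; apply H; lia.
Qed.

Lemma sumseq_plus a L g h : sumseq a L (fun n => g n + h n) = sumseq a L g + sumseq a L h.
Proof. revert a; induction L; intros a; [simpl; unfold sumseq; simpl; ring|].
  rewrite !sumseq_S, IHL. ring. Qed.

Lemma sumseq_scal a L k g : sumseq a L (fun n => k * g n) = k * sumseq a L g.
Proof. revert a; induction L; intros a; [unfold sumseq; simpl; ring|].
  rewrite !sumseq_S, IHL. ring. Qed.

Lemma sumseq_zero a L : sumseq a L (fun _ => 0) = 0.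
Proof. revert a; induction L; intros a; [reflexivity|]. rewrite sumseq_S, IHL; ring. Qed.

Lemma sumseq_ind_out a L k c : (k < a \/ a + L <= k)%nat -> sumseq a L (ind k c) = 0.
Proof. intros H. rewrite <- (sumseq_zero a L). apply sumseq_ext. intros n Hn.
  unfold ind. destruct (Nat.eqb_spec n k); [lia|reflexivity]. Qed.

Lemma sumseq_ind a L k c : (a <= k < a + L)%nat -> sumseq a L (ind k c) = c.
Proof.
  revert a; induction L; intros a H; [lia|].
  rewrite sumseq_S. unfold ind at 1. destruct (Nat.eqb_spec a k).
  - rewrite sumseq_ind_out by lia. ring.
  - rewrite IHL by lia. ring.
Qed.

Lemma sumseq_indl a L l : Forall (fun kc => (a <= fst kc < a + L)%nat) l ->
  sumseq a L (indl l) = lsum l.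
Proof.
  induction l as [|kc l IH]; intros H.
  - unfold indl; simpl. apply sumseq_zero.
  - inversion H; subst. unfold indl; simpl.
    rewrite sumseq_plus. rewrite sumseq_ind by auto. fold (indl l). rewrite IH by auto. reflexivity.
Qed.

Lemma fold_Rplus_acc l z : fold_right Rplus z l = fold_right Rplus 0 l + z.
Proof. induction l; simpl; [ring|rewrite IHl; ring]. Qed.

Lemma sum_omega_split N0 N1 f : sum_omega N0 N1 f =
  sumseq 0 (N0+2) (fun n => f n 0%nat) + sumseq 1 (N1+1) (fun n => f n 1%nat).
Proof.
  unfold sum_omega, omega, sumseq. rewrite map_app, fold_right_app, fold_Rplus_acc.
  rewrite !map_map. simpl. reflexivity.
Qed.

Lemma colsum_gen N0 N1 (F : nat -> nat -> R) l0 l1 :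
  (forall n, (n < N0 + 2)%nat -> F n 0%nat = indl l0 n) ->
  (forall n, (1 <= n < N1 + 2)%nat -> F n 1%nat = indl l1 n) ->
  Forall (fun kc => (0 <= fst kc < 0 + (N0 + 2))%nat) l0 ->
  Forall (fun kc => (1 <= fst kc < 1 + (N1 + 1))%nat) l1 ->
  sum_omega N0 N1 F = lsum l0 + lsum l1.
Proof.
  intros H0 H1 F0 F1. rewrite sum_omega_split.
  rewrite (sumseq_ext 0 (N0+2) _ (indl l0)) by (intros; apply H0; lia).
  rewrite (sumseq_ext 1 (N1+1) _ (indl l1)) by (intros; apply H1; lia).
  rewrite !sumseq_indl by auto. reflexivity.
Qed.

Ltac bash :=
  repeat (match goal with
   | |- context [Nat.eqb ?a ?b] => destruct (Nat.eqb_spec a b)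
   | |- context [Nat.leb ?a ?b] => destruct (Nat.leb_spec a b)
   end; cbn [andb orb] in *; try (exfalso; lia)).

Ltac fixidx x :=
  repeat match goal with |- context [x ?a ?j] => match goal with |- context [x ?b j] =>
     assert_fails (constr_eq a b); replace b with a by lia end end.

Ltac colpt x := intros ? ?; unfold indl; cbn [fold_right fst snd]; unfold ind, trans; cbv zeta;
  bash; fixidx x; ring.

Section S.
Variables (p mub muv th : R) (N0 N1 : nat).
Hypothesis (hN0 : (2 <= N0)%nat) (hN1 : (N0 + 2 <= N1)%nat).
Hypothesis (hp : 0 < p < 1) (hmub : 0 < mub < 1) (hmuv : 0 < muv < 1) (hth : 0 < th < 1).
Local Notation T := (trans p mub muv th N0 N1).
Local Notation sv := (s_nu p muv).
Local Notation sb := (s_b p mub).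


Record Loc (x : nat -> nat -> R) : Prop := {
  L00 : x 0%nat 0%nat = bar p * x 0%nat 0%nat + bar p * muv * x 1%nat 0%nat + bar p * mub * x 1%nat 1%nat;
  L10 : x 1%nat 0%nat = p * bar th * x 0%nat 0%nat + bar th * sv * x 1%nat 0%nat + bar p * bar th * muv * x 2%nat 0%nat;
  Ln0 : forall m, (2 <= m <= N0 - 1)%nat -> x m 0%nat =
     p * bar th * bar muv * x (m-1)%nat 0%nat + bar th * sv * x m 0%nat + bar p * bar th * muv * x (m+1)%nat 0%nat;
  LN00 : x N0 0%nat = p * bar th * bar muv * x (N0-1)%nat 0%nat + bar th * sv * x N0 0%nat + bar th * muv * x (N0+1)%nat 0%nat;
  LN010 : x (N0+1)%nat 0%nat = p * bar th * bar muv * x N0 0%nat + bar th * bar muv * x (N0+1)%nat 0%nat;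
  L11 : x 1%nat 1%nat = p * th * x 0%nat 0%nat + th * sv * x 1%nat 0%nat + bar p * th * muv * x 2%nat 0%nat
     + sb * x 1%nat 1%nat + bar p * mub * x 2%nat 1%nat;
  Ln1 : forall m, (2 <= m <= N0 - 1)%nat -> x m 1%nat =
     p * th * bar muv * x (m-1)%nat 0%nat + th * sv * x m 0%nat + bar p * th * muv * x (m+1)%nat 0%nat
     + p * bar mub * x (m-1)%nat 1%nat + sb * x m 1%nat + bar p * mub * x (m+1)%nat 1%nat;
  LN01 : x N0 1%nat =
     p * th * bar muv * x (N0-1)%nat 0%nat + th * sv * x N0 0%nat + th * muv * x (N0+1)%nat 0%nat
     + p * bar mub * x (N0-1)%nat 1%nat + sb * x N0 1%nat + bar p * mub * x (N0+1)%nat 1%nat;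
  LN011 : x (N0+1)%nat 1%nat =
     p * th * bar muv * x N0 0%nat + th * bar muv * x (N0+1)%nat 0%nat
     + p * bar mub * x N0 1%nat + sb * x (N0+1)%nat 1%nat + bar p * mub * x (N0+2)%nat 1%nat;
  Lm1 : forall m, (N0 + 2 <= m <= N1 - 1)%nat -> x m 1%nat =
     p * bar mub * x (m-1)%nat 1%nat + sb * x m 1%nat + bar p * mub * x (m+1)%nat 1%nat;
  LN11 : x N1 1%nat = p * bar mub * x (N1-1)%nat 1%nat + sb * x N1 1%nat + mub * x (N1+1)%nat 1%nat;
  LN111 : x (N1+1)%nat 1%nat = p * bar mub * x N1 1%nat + bar mub * x (N1+1)%nat 1%nat
}.

Local Notation CS x a b := (sum_omega N0 N1 (fun n j => x n j * T n j a b)).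

Ltac colfin := unfold lsum; cbn [fold_right fst snd]; ring.
Ltac colrng := repeat constructor; cbn [fst]; lia.

Lemma c00 x : CS x 0%nat 0%nat = bar p * x 0%nat 0%nat + bar p * muv * x 1%nat 0%nat + bar p * mub * x 1%nat 1%nat.
Proof. rewrite (colsum_gen N0 N1 _ [(0%nat, bar p * x 0%nat 0%nat); (1%nat, bar p * muv * x 1%nat 0%nat)]
       [(1%nat, bar p * mub * x 1%nat 1%nat)]); [colfin|colpt x|colpt x|colrng|colrng]. Qed.

Lemma c10 x : CS x 1%nat 0%nat = p * bar th * x 0%nat 0%nat + bar th * sv * x 1%nat 0%nat + bar p * bar th * muv * x 2%nat 0%nat.
Proof. rewrite (colsum_gen N0 N1 _ [(0%nat, p * bar th * x 0%nat 0%nat); (1%nat, bar th * sv * x 1%nat 0%nat);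
       (2%nat, bar p * bar th * muv * x 2%nat 0%nat)] []); [colfin|colpt x|colpt x|colrng|colrng]. Qed.

Lemma cn0 x (m : nat) (Hm : (2 <= m <= N0 - 1)%nat) : CS x m 0%nat = p * bar th * bar muv * x (m-1)%nat 0%nat + bar th * sv * x m 0%nat + bar p * bar th * muv * x (m+1)%nat 0%nat.
Proof. rewrite (colsum_gen N0 N1 _ [((m-1)%nat, p * bar th * bar muv * x (m-1)%nat 0%nat);
     (m, bar th * sv * x m 0%nat); ((m+1)%nat, bar p * bar th * muv * x (m+1)%nat 0%nat)] []);
     [colfin|colpt x|colpt x|colrng|colrng]. Qed.

Lemma cN00 x : CS x N0 0%nat = p * bar th * bar muv * x (N0-1)%nat 0%nat + bar th * sv * x N0 0%nat + bar th * muv * x (N0+1)%nat 0%nat.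
Proof. rewrite (colsum_gen N0 N1 _ [((N0-1)%nat, p * bar th * bar muv * x (N0-1)%nat 0%nat);
     (N0, bar th * sv * x N0 0%nat); ((N0+1)%nat, bar th * muv * x (N0+1)%nat 0%nat)] []);
     [colfin|colpt x|colpt x|colrng|colrng]. Qed.

Lemma cN010 x : CS x (N0+1)%nat 0%nat = p * bar th * bar muv * x N0 0%nat + bar th * bar muv * x (N0+1)%nat 0%nat.
Proof. rewrite (colsum_gen N0 N1 _ [(N0, p * bar th * bar muv * x N0 0%nat);
     ((N0+1)%nat, bar th * bar muv * x (N0+1)%nat 0%nat)] []);
     [colfin|colpt x|colpt x|colrng|colrng]. Qed.

Lemma c11 x : CS x 1%nat 1%nat = p * th * x 0%nat 0%nat + th * sv * x 1%nat 0%nat + bar p * th * muv * x 2%nat 0%nat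
     + sb * x 1%nat 1%nat + bar p * mub * x 2%nat 1%nat.
Proof. rewrite (colsum_gen N0 N1 _ [(0%nat, p * th * x 0%nat 0%nat); (1%nat, th * sv * x 1%nat 0%nat);
       (2%nat, bar p * th * muv * x 2%nat 0%nat)] [(1%nat, sb * x 1%nat 1%nat); (2%nat, bar p * mub * x 2%nat 1%nat)]);
       [colfin|colpt x|colpt x|colrng|colrng]. Qed.

Lemma cn1 x (m : nat) (Hm : (2 <= m <= N0 - 1)%nat) : CS x m 1%nat = p * th * bar muv * x (m-1)%nat 0%nat + th * sv * x m 0%nat + bar p * th * muv * x (m+1)%nat 0%nat
     + p * bar mub * x (m-1)%nat 1%nat + sb * x m 1%nat + bar p * mub * x (m+1)%nat 1%nat.
Proof. rewrite (colsum_gen N0 N1 _ [((m-1)%nat, p * th * bar muv * x (m-1)%nat 0%nat);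
     (m, th * sv * x m 0%nat); ((m+1)%nat, bar p * th * muv * x (m+1)%nat 0%nat)]
     [((m-1)%nat, p * bar mub * x (m-1)%nat 1%nat);
     (m, sb * x m 1%nat); ((m+1)%nat, bar p * mub * x (m+1)%nat 1%nat)]);
     [colfin|colpt x|colpt x|colrng|colrng]. Qed.

Lemma cN01 x : CS x N0 1%nat = p * th * bar muv * x (N0-1)%nat 0%nat + th * sv * x N0 0%nat + th * muv * x (N0+1)%nat 0%nat
     + p * bar mub * x (N0-1)%nat 1%nat + sb * x N0 1%nat + bar p * mub * x (N0+1)%nat 1%nat.
Proof. rewrite (colsum_gen N0 N1 _ [((N0-1)%nat, p * th * bar muv * x (N0-1)%nat 0%nat);
     (N0, th * sv * x N0 0%nat); ((N0+1)%nat, th * muv * x (N0+1)%nat 0%nat)]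
     [((N0-1)%nat, p * bar mub * x (N0-1)%nat 1%nat);
     (N0, sb * x N0 1%nat); ((N0+1)%nat, bar p * mub * x (N0+1)%nat 1%nat)]);
     [colfin|colpt x|colpt x|colrng|colrng]. Qed.

Lemma cN011 x : CS x (N0+1)%nat 1%nat = p * th * bar muv * x N0 0%nat + th * bar muv * x (N0+1)%nat 0%nat
     + p * bar mub * x N0 1%nat + sb * x (N0+1)%nat 1%nat + bar p * mub * x (N0+2)%nat 1%nat.
Proof. rewrite (colsum_gen N0 N1 _ [(N0, p * th * bar muv * x N0 0%nat);
     ((N0+1)%nat, th * bar muv * x (N0+1)%nat 0%nat)]
     [(N0, p * bar mub * x N0 1%nat);
     ((N0+1)%nat, sb * x (N0+1)%nat 1%nat); ((N0+2)%nat, bar p * mub * x (N0+2)%nat 1%nat)]);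
     [colfin|colpt x|colpt x|colrng|colrng]. Qed.

Lemma cm1 x (m : nat) (Hm : (N0 + 2 <= m <= N1 - 1)%nat) : CS x m 1%nat = p * bar mub * x (m-1)%nat 1%nat + sb * x m 1%nat + bar p * mub * x (m+1)%nat 1%nat.
Proof. rewrite (colsum_gen N0 N1 _ []
     [((m-1)%nat, p * bar mub * x (m-1)%nat 1%nat);
     (m, sb * x m 1%nat); ((m+1)%nat, bar p * mub * x (m+1)%nat 1%nat)]);
     [colfin|colpt x|colpt x|colrng|colrng]. Qed.

Lemma cN11 x : CS x N1 1%nat = p * bar mub * x (N1-1)%nat 1%nat + sb * x N1 1%nat + mub * x (N1+1)%nat 1%nat.
Proof. rewrite (colsum_gen N0 N1 _ []
     [((N1-1)%nat, p * bar mub * x (N1-1)%nat 1%nat);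
     (N1, sb * x N1 1%nat); ((N1+1)%nat, mub * x (N1+1)%nat 1%nat)]);
     [colfin|colpt x|colpt x|colrng|colrng]. Qed.

Lemma cN111 x : CS x (N1+1)%nat 1%nat = p * bar mub * x N1 1%nat + bar mub * x (N1+1)%nat 1%nat.
Proof. rewrite (colsum_gen N0 N1 _ []
     [(N1, p * bar mub * x N1 1%nat); ((N1+1)%nat, bar mub * x (N1+1)%nat 1%nat)]);
     [colfin|colpt x|colpt x|colrng|colrng].
Qed.


Lemma loc_of_stat x : (forall n' j', inOmega N0 N1 n' j' -> CS x n' j' = x n' j') -> Loc x.
Proof.
  intros H. constructor; intros;
  [ rewrite <- (H 0%nat 0%nat) at 1 by (left; lia); apply c00
  | rewrite <- (H 1%nat 0%nat) at 1 by (left; lia); apply c10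
  | rewrite <- (H m 0%nat) at 1 by (left; lia); apply cn0; auto
  | rewrite <- (H N0 0%nat) at 1 by (left; lia); apply cN00
  | rewrite <- (H (N0+1)%nat 0%nat) at 1 by (left; lia); apply cN010
  | rewrite <- (H 1%nat 1%nat) at 1 by (right; lia); apply c11
  | rewrite <- (H m 1%nat) at 1 by (right; lia); apply cn1; auto
  | rewrite <- (H N0 1%nat) at 1 by (right; lia); apply cN01
  | rewrite <- (H (N0+1)%nat 1%nat) at 1 by (right; lia); apply cN011
  | rewrite <- (H m 1%nat) at 1 by (right; lia); apply cm1; auto
  | rewrite <- (H N1 1%nat) at 1 by (right; lia); apply cN11
  | rewrite <- (H (N1+1)%nat 1%nat) at 1 by (right; lia); apply cN111 ].
Qed.

Lemma stat_of_loc x : Loc x -> forall n' j', inOmega N0 N1 n' j' -> CS x n' j' = x n' j'.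
Proof.
  intros HL n' j' [[-> Hn]|[-> Hn]].
  - destruct (Nat.eq_dec n' 0) as [->|]; [rewrite c00; symmetry; apply HL|].
    destruct (Nat.eq_dec n' 1) as [->|]; [rewrite c10; symmetry; apply HL|].
    destruct (Nat.eq_dec n' N0) as [->|]; [rewrite cN00; symmetry; apply HL|].
    destruct (Nat.eq_dec n' (N0+1)) as [->|]; [rewrite cN010; symmetry; apply HL|].
    rewrite cn0 by lia; symmetry; apply HL; lia.
  - destruct (Nat.eq_dec n' 1) as [->|]; [rewrite c11; symmetry; apply HL|].
    destruct (Nat.eq_dec n' N0) as [->|]; [rewrite cN01; symmetry; apply HL|].
    destruct (Nat.eq_dec n' (N0+1)) as [->|]; [rewrite cN011; symmetry; apply HL|].
    destruct (Nat.eq_dec n' N1) as [->|]; [rewrite cN11; symmetry; apply HL|].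
    destruct (Nat.eq_dec n' (N1+1)) as [->|]; [rewrite cN111; symmetry; apply HL|].
    destruct (Nat.le_gt_cases n' (N0-1)).
    + rewrite cn1 by lia; symmetry; apply HL; lia.
    + rewrite cm1 by lia; symmetry; apply HL; lia.
Qed.

Lemma Loc_lin a b x y : Loc x -> Loc y -> Loc (fun n j => a * x n j + b * y n j).
Proof.
  intros Hx Hy. constructor; cbv beta.
  - rewrite (L00 x Hx) at 1; rewrite (L00 y Hy) at 1; ring.
  - rewrite (L10 x Hx) at 1; rewrite (L10 y Hy) at 1; ring.
  - intros m Hm; rewrite (Ln0 x Hx m Hm) at 1; rewrite (Ln0 y Hy m Hm) at 1; ring.
  - rewrite (LN00 x Hx) at 1; rewrite (LN00 y Hy) at 1; ring.
  - rewrite (LN010 x Hx) at 1; rewrite (LN010 y Hy) at 1; ring.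
  - rewrite (L11 x Hx) at 1; rewrite (L11 y Hy) at 1; ring.
  - intros m Hm; rewrite (Ln1 x Hx m Hm) at 1; rewrite (Ln1 y Hy m Hm) at 1; ring.
  - rewrite (LN01 x Hx) at 1; rewrite (LN01 y Hy) at 1; ring.
  - rewrite (LN011 x Hx) at 1; rewrite (LN011 y Hy) at 1; ring.
  - intros m Hm; rewrite (Lm1 x Hx m Hm) at 1; rewrite (Lm1 y Hy m Hm) at 1; ring.
  - rewrite (LN11 x Hx) at 1; rewrite (LN11 y Hy) at 1; ring.
  - rewrite (LN111 x Hx) at 1; rewrite (LN111 y Hy) at 1; ring.
Qed.

Lemma pos_div a y : 0 < a -> 0 <= a * y -> 0 <= y.
Proof. intros Ha H. destruct (Rle_or_lt 0 y); auto. exfalso.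
  assert (a * y < 0) by nra. lra. Qed.

Lemma sv_pos : 0 < sv.
Proof. unfold s_nu, bar. nra. Qed.

Lemma u_nonneg x : Loc x -> 0 <= x (N0+1)%nat 0%nat ->
  forall k, (k <= N0 - 1)%nat ->
  0 <= x (N0-k+1)%nat 0%nat /\ 0 <= x (N0-k)%nat 0%nat /\
  0 <= p*bar th*bar muv*x (N0-k)%nat 0%nat
       - (if (N0-k =? N0)%nat then bar th*muv else bar p*bar th*muv) * x (N0-k+1)%nat 0%nat.
Proof.
  intros HL H0. induction k as [|k IH]; intros Hk.
  - replace (N0 - 0)%nat with N0 by lia. rewrite Nat.eqb_refl.
    pose proof (LN010 x HL) as E.
    assert (E2 : p*bar th*bar muv * x N0 0%nat = (th + bar th * muv) * x (N0+1)%nat 0%nat)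
      by (unfold bar in *; lra).
    split; [auto|split].
    + apply (pos_div (p*bar th*bar muv)). unfold bar; apply Rmult_lt_0_compat; [apply Rmult_lt_0_compat|]; lra.
      rewrite E2. apply Rmult_le_pos; [unfold bar; nra|auto].
    + rewrite E2. unfold bar in *. nra.
  - destruct IH as [IH1 [IH2 IH3]]; [lia|].
    replace (N0 - S k + 1)%nat with (N0 - k)%nat by lia.
    remember (N0 - k)%nat as m eqn:Hm.
    replace (N0 - S k)%nat with (m - 1)%nat by lia.
    replace ((m - 1 =? N0)%nat) with false by (symmetry; apply Nat.eqb_neq; lia).
    assert (E : x m 0%nat = p * bar th * bar muv * x (m-1)%nat 0%nat + bar th * sv * x m 0%nat
         + (if (m =? N0)%nat then bar th*muv else bar p*bar th*muv) * x (m+1)%nat 0%nat).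
    { destruct (Nat.eqb_spec m N0) as [->|].
      - apply (LN00 x HL).
      - apply (Ln0 x HL); lia. }
    set (c := if (m =? N0)%nat then bar th*muv else bar p*bar th*muv) in *.
    assert (E2 : p*bar th*bar muv*x (m-1)%nat 0%nat - bar p*bar th*muv * x m 0%nat
       = th * x m 0%nat + (p*bar th*bar muv*x m 0%nat - c * x (m+1)%nat 0%nat))
      by (unfold s_nu, bar in *; lra).
    split; [auto|split].
    + apply (pos_div (p*bar th*bar muv)). unfold bar; apply Rmult_lt_0_compat; [apply Rmult_lt_0_compat|]; lra.
      assert (0 <= bar p*bar th*muv * x m 0%nat) by (unfold bar; apply Rmult_le_pos; [|auto];
        apply Rmult_le_pos; [apply Rmult_le_pos|]; lra).
      assert (0 <= th * x m 0%nat) by (apply Rmult_le_pos; lra). lra.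
    + assert (0 <= th * x m 0%nat) by (apply Rmult_le_pos; lra). lra.
Qed.

Lemma u_all x : Loc x -> 0 <= x (N0+1)%nat 0%nat ->
  (forall n, (n <= N0+1)%nat -> 0 <= x n 0%nat) /\ 0 <= p * x 0%nat 0%nat - bar p * muv * x 1%nat 0%nat.
Proof.
  intros HL H0.
  pose proof (u_nonneg x HL H0 (N0-1)%nat (le_n _)) as [A1 [A2 A3]].
  replace (N0 - (N0-1) + 1)%nat with 2%nat in * by lia.
  replace (N0 - (N0-1))%nat with 1%nat in * by lia.
  replace ((1 =? N0)%nat) with false in A3 by (symmetry; apply Nat.eqb_neq; lia).
  pose proof (L10 x HL) as E.
  assert (E2 : bar th * (p * x 0%nat 0%nat - bar p * muv * x 1%nat 0%nat) =
     th * x 1%nat 0%nat + (p * bar th * bar muv * x 1%nat 0%nat - bar p * bar th * muv * x 2%nat 0%nat))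
     by (unfold s_nu, bar in *; lra).
  assert (G : 0 <= p * x 0%nat 0%nat - bar p * muv * x 1%nat 0%nat).
  { apply (pos_div (bar th)); [unfold bar; lra|]. rewrite E2.
    assert (0 <= th * x 1%nat 0%nat) by (apply Rmult_le_pos; lra). lra. }
  split; [|exact G].
  intros n Hn.
  destruct (Nat.eq_dec n 0) as [->|].
  - apply (pos_div p); [lra|].
    assert (0 <= bar p * muv * x 1%nat 0%nat) by (unfold bar; apply Rmult_le_pos; [nra|auto]). lra.
  - destruct (Nat.eq_dec n (N0+1)) as [->|]; [auto|].
    pose proof (u_nonneg x HL H0 (N0-n)%nat ltac:(lia)) as [_ [B _]].
    replace (N0 - (N0 - n))%nat with n in B by lia. exact B.
Qed.

Ltac posr := repeat apply Rmult_le_pos; try (unfold bar; lra); try lra.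

Lemma vstep x : Loc x -> (forall n, (n <= N0+1)%nat -> 0 <= x n 0%nat) ->
  forall m, (2 <= m <= N1 - 1)%nat ->
  bar p * mub * x (m+1)%nat 1%nat - p * bar mub * x m 1%nat <= bar p * mub * x m 1%nat - p * bar mub * x (m-1)%nat 1%nat.
Proof.
  intros HL Hu m Hm. pose proof sv_pos.
  assert (P : forall a n, 0 <= a -> (n <= N0+1)%nat -> 0 <= a * x n 0%nat)
    by (intros; apply Rmult_le_pos; auto).
  assert (Hb : 0 <= bar muv /\ 0 <= bar p /\ 0 <= bar th) by (unfold bar; lra).
  destruct (Nat.le_gt_cases m (N0-1)).
  - pose proof (Ln1 x HL m ltac:(lia)) as E.
    assert (0 <= p * th * bar muv * x (m-1)%nat 0%nat) by (apply P; [posr|lia]).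
    assert (0 <= th * sv * x m 0%nat) by (apply P; [posr|lia]).
    assert (0 <= bar p * th * muv * x (m+1)%nat 0%nat) by (apply P; [posr|lia]).
    unfold s_b, bar in *. lra.
  - destruct (Nat.eq_dec m N0) as [->|].
    + pose proof (LN01 x HL) as E.
      assert (0 <= p * th * bar muv * x (N0-1)%nat 0%nat) by (apply P; [posr|lia]).
      assert (0 <= th * sv * x N0 0%nat) by (apply P; [posr|lia]).
      assert (0 <= th * muv * x (N0+1)%nat 0%nat) by (apply P; [posr|lia]).
      unfold s_b, bar in *. lra.
    + destruct (Nat.eq_dec m (N0+1)) as [->|].
      * pose proof (LN011 x HL) as E.
        replace (N0+1+1)%nat with (N0+2)%nat by lia. replace (N0+1-1)%nat with N0 by lia.
        assert (0 <= p * th * bar muv * x N0 0%nat) by (apply P; [posr|lia]).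
        assert (0 <= th * bar muv * x (N0+1)%nat 0%nat) by (apply P; [posr|lia]).
        unfold s_b, bar in *. lra.
      * pose proof (Lm1 x HL m ltac:(lia)) as E.
        unfold s_b, bar in *. lra.
Qed.

Lemma v_all x : Loc x -> 0 <= x (N0+1)%nat 0%nat ->
  forall n, (1 <= n <= N1+1)%nat -> 0 <= x n 1%nat.
Proof.
  intros HL H0. destruct (u_all x HL H0) as [Hu G].
  assert (V1 : 0 <= x 1%nat 1%nat).
  { pose proof (L00 x HL) as E. apply (pos_div (bar p * mub)); [unfold bar; nra|].
    unfold bar in *; lra. }
  assert (Top : bar p * mub * x N1 1%nat - p * bar mub * x (N1-1)%nat 1%nat = 0).
  { pose proof (LN11 x HL). pose proof (LN111 x HL). unfold s_b, bar in *; lra. }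
  assert (Dn : forall k, (k <= N1 - 2)%nat ->
     0 <= bar p * mub * x (N1-k)%nat 1%nat - p * bar mub * x (N1-k-1)%nat 1%nat).
  { induction k as [|k IH]; intros Hk.
    - replace (N1-0)%nat with N1 by lia. lra.
    - pose proof (vstep x HL Hu (N1-k-1)%nat ltac:(lia)) as Sx.
      replace (N1-k-1+1)%nat with (N1-k)%nat in Sx by lia.
      replace (N1 - S k)%nat with (N1-k-1)%nat by lia.
      replace (N1-k-1-1)%nat with (N1-k-1-1)%nat by lia.
      specialize (IH ltac:(lia)). lra. }
  assert (Up : forall n, (1 <= n <= N1)%nat -> 0 <= x n 1%nat).
  { induction n as [|n IH]; intros Hn; [lia|].
    destruct (Nat.eq_dec n 0) as [->|]; [exact V1|].
    specialize (IH ltac:(lia)).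
    pose proof (Dn (N1 - S n)%nat ltac:(lia)) as D.
    replace (N1 - (N1 - S n))%nat with (S n) in D by lia.
    replace (S n - 1)%nat with n in D by lia.
    apply (pos_div (bar p * mub)); [unfold bar; nra|].
    assert (0 <= p * bar mub * x n 1%nat) by (apply Rmult_le_pos; [unfold bar; nra|auto]). lra. }
  intros n Hn. destruct (Nat.eq_dec n (N1+1)) as [->|]; [|apply Up; lia].
  pose proof (LN111 x HL) as E. apply (pos_div mub); [lra|].
  assert (0 <= p * bar mub * x N1 1%nat) by (apply Rmult_le_pos; [unfold bar; nra|apply Up; lia]).
  unfold bar in *; lra.
Qed.

Lemma loc_nonneg x : Loc x -> 0 <= x (N0+1)%nat 0%nat ->
  forall n j, inOmega N0 N1 n j -> 0 <= x n j.
Proof.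
  intros HL H0 n j [[-> Hn]|[-> Hn]].
  - apply (proj1 (u_all x HL H0)); lia.
  - apply v_all; auto; lia.
Qed.

Lemma loc_zero x : Loc x -> x (N0+1)%nat 0%nat = 0 ->
  forall n j, inOmega N0 N1 n j -> x n j = 0.
Proof.
  intros HL H0 n j Hnj.
  pose proof (loc_nonneg x HL ltac:(lra) n j Hnj).
  pose proof (Loc_lin (-1) 0 x x HL HL) as HL'.
  pose proof (loc_nonneg _ HL' ltac:(cbv beta; lra) n j Hnj). cbv beta in *. lra.
Qed.
End S.


Section Alg.
Variables (p mub muv th : R) (N0 N1 : nat).
Hypothesis (hN0 : (2 <= N0)%nat) (hN1 : (N0 + 2 <= N1)%nat).
Hypothesis (hp : 0 < p < 1) (hmub : 0 < mub < 1) (hmuv : 0 < muv < 1) (hth : 0 < th < 1).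
Hypothesis (halpha : alpha p mub < 1) (hDelta : DeltaQ p muv th N0 <> 0)
  (hx1 : alpha p mub <> x1star p muv th) (hx2 : alpha p mub <> x2star p muv th).

Local Notation x1 := (x1star p muv th).
Local Notation x2 := (x2star p muv th).
Local Notation al := (alpha p mub).
Local Notation sv := (s_nu p muv).
Local Notation sb := (s_b p mub).

Ltac nz := repeat split; unfold bar in *; try lra; try nra.

Lemma ath_pos : 0 < bar th * bar p * muv.
Proof. unfold bar. apply Rmult_lt_0_compat; [apply Rmult_lt_0_compat|]; lra. Qed.

Lemma disc_nonneg : 0 <= Defs.disc p muv th.
Proof.
  unfold Defs.disc, gam, bar.
  set (a := p * (1 - muv)). set (b := (1 - p) * muv).
  assert (0 <= a) by (unfold a; nra). assert (0 <= b) by (unfold b; nra).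
  assert (E : 4 * (1 - th) ^ 2 * p * (1 - p) * muv * (1 - muv) = 4 * (1-th)^2 * a * b) by (unfold a, b; ring).
  rewrite E.
  assert (th + (1 - th) * p * (1 - muv) + (1 - th) * (1 - p) * muv = th + (1-th) * (a + b)) by (unfold a, b; ring).
  rewrite H1.
  assert (0 <= (1-th) * (a+b)) by nra.
  assert (((1-th)*(a+b))^2 - 4 * (1-th)^2 * a * b = ((1-th)*(a-b))^2) by ring.
  assert (0 <= ((1-th)*(a-b))^2) by (apply pow2_ge_0).
  set (y := (1-th)*(a+b)) in *.
  assert (0 <= th*(th+2*y)) by (apply Rmult_le_pos; lra).
  replace ((th+y)^2) with (y^2 + th*(th+2*y)) by ring.
  lra.
Qed.

Lemma x_sum : bar th * bar p * muv * (x1 + x2) = gam p muv th.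
Proof. unfold x1star, x2star. pose proof ath_pos. field. nz. Qed.

Lemma x_prod : bar th * bar p * muv * (x1 * x2) = bar th * p * bar muv.
Proof.
  unfold x1star, x2star. pose proof ath_pos. pose proof disc_nonneg.
  assert (E : (gam p muv th + sqrt (Defs.disc p muv th)) / (2 * bar th * bar p * muv) *
    ((gam p muv th - sqrt (Defs.disc p muv th)) / (2 * bar th * bar p * muv)) =
    (gam p muv th ^ 2 - sqrt (Defs.disc p muv th) * sqrt (Defs.disc p muv th)) / (4 * (bar th * bar p * muv) ^ 2))
    by (field; nz).
  rewrite E, sqrt_sqrt by auto. unfold Defs.disc. field. nz.
Qed.

Definition Qf (x : R) := bar th * bar p * muv * x ^ 2 - gam p muv th * x + bar th * p * bar muv.

Lemma Q1 : Qf x1 = 0.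
Proof. unfold Qf. rewrite <- x_sum, <- x_prod. ring. Qed.
Lemma Q2 : Qf x2 = 0.
Proof. unfold Qf. rewrite <- x_sum, <- x_prod. ring. Qed.

Lemma Q_ne1 x : Qf x = 0 -> x <> 1.
Proof. intros H ->. unfold Qf, gam, bar in H. lra. Qed.

Lemma x1_ne1 : x1 - 1 <> 0.
Proof. pose proof (Q_ne1 _ Q1). lra. Qed.
Lemma x2_ne1 : x2 - 1 <> 0.
Proof. pose proof (Q_ne1 _ Q2). lra. Qed.

Lemma pmb_pos : 0 < bar p * mub.
Proof. unfold bar. apply Rmult_lt_0_compat; lra. Qed.

Lemma al_pos : 0 < al.
Proof. unfold alpha. pose proof pmb_pos. unfold bar in *. apply Rdiv_lt_0_compat; nra. Qed.

Lemma al_def : al * (bar p * mub) = p * bar mub.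
Proof. unfold alpha. pose proof pmb_pos. field. nz. Qed.

Lemma dx1 : p * bar mub - bar p * mub * x1 <> 0.
Proof. rewrite <- al_def. intro H. apply hx1. pose proof pmb_pos.
  apply (Rmult_eq_reg_r (bar p * mub)); [|lra]. lra. Qed.
Lemma dx2 : bar p * mub * x2 - p * bar mub <> 0.
Proof. rewrite <- al_def. intro H. apply hx2. pose proof pmb_pos.
  apply (Rmult_eq_reg_r (bar p * mub)); [|lra]. lra. Qed.

Lemma x_prod_pos : 0 < x1 * x2.
Proof. pose proof x_prod. pose proof ath_pos.
  apply (Rmult_lt_reg_l (bar th * bar p * muv)); auto. rewrite H, Rmult_0_r.
  unfold bar. apply Rmult_lt_0_compat; [apply Rmult_lt_0_compat|]; lra. Qed.

Lemma hmu_sub : muv = p / (p + bar p * (x1 * x2)).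
Proof. pose proof x_prod. pose proof x_prod_pos. pose proof ath_pos.
  assert (E : x1 * x2 = p * bar muv / (bar p * muv)).
  { apply (Rmult_eq_reg_l (bar th * bar p * muv)); [|lra]. rewrite H. field.
    unfold bar in *; split; lra. }
  rewrite E. unfold bar. field. split; [lra|]. split; [lra|]. nra. Qed.

Lemma hth_sub : th = 1 - 1 / (bar p * muv * (x1 + x2) + (1 - p * bar muv - bar p * muv)).
Proof. pose proof x_sum. pose proof ath_pos.
  assert (E : x1 + x2 = gam p muv th / (bar th * bar p * muv)).
  { apply (Rmult_eq_reg_l (bar th * bar p * muv)); [|lra]. rewrite H. field. nz. }
  rewrite E. unfold gam, bar in *. field. split; [nra|]. lra. Qed.


Local Notation CF c := (closed_form p mub muv th N0 c N1).
Local Notation A1 c := (tA1 p mub muv th N0 c).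
Local Notation B1 c := (tB1 p mub muv th N0 c).
Local Notation C1 c := (tC1 p mub muv th N0 c).
Local Notation D1 c := (tD1 p mub muv th N0 c).
Local Notation A2 c := (tA2 p mub muv th N0 c).
Local Notation B2 c := (tB2 p mub muv th N0 c).
Local Notation P1 c := (piN0p1_1 p mub muv th N0 c).

Lemma cf00 c : CF c 0%nat 0%nat = bar p * muv / p * (A1 c * x1 + B1 c * x2) + bar p * mub / p * c.
Proof. reflexivity. Qed.

Lemma cfn0 c n : (1 <= n <= N0)%nat -> CF c n 0%nat = A1 c * x1 ^ n + B1 c * x2 ^ n.
Proof. intros Hn. unfold closed_form. bash. reflexivity. Qed.

Lemma cfN010 c : CF c (N0+1)%nat 0%nat =
  p * bar th * bar muv / (1 - bar th * bar muv) * (A1 c * x1 ^ N0 + B1 c * x2 ^ N0).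
Proof. unfold closed_form. bash. reflexivity. Qed.

Lemma cfn1 c n : (1 <= n <= N0)%nat -> CF c n 1%nat = A2 c + B2 c * al ^ n + C1 c * x1 ^ n + D1 c * x2 ^ n.
Proof. intros Hn. unfold closed_form. bash. reflexivity. Qed.

Lemma cfm1 c n : (N0 + 1 <= n <= N1)%nat -> CF c n 1%nat = al ^ (n - N0 - 1) * P1 c.
Proof. intros Hn. unfold closed_form. bash.
  - replace (n - N0 - 1)%nat with 0%nat by lia. simpl. ring.
  - reflexivity. Qed.

Lemma cfN111 c : CF c (N1+1)%nat 1%nat = bar p * al ^ (N1 - N0) * P1 c.
Proof. unfold closed_form. bash. reflexivity. Qed.

Lemma al_ne1 : 1 - al <> 0.
Proof. lra. Qed.
Lemma al_ne0 : al <> 0.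
Proof. pose proof al_pos. lra. Qed.
Lemma pmb_ne0 : bar p * mub <> 0.
Proof. pose proof pmb_pos. lra. Qed.

Lemma x_order : x2 < 1 < x1.
Proof.
  pose proof ath_pos. pose proof disc_nonneg.
  assert (D : x1 - x2 = sqrt (Defs.disc p muv th) / (bar th * bar p * muv)) by (unfold x1star, x2star; field; nz).
  assert (0 <= x1 - x2) by (rewrite D; unfold Rdiv; apply Rmult_le_pos; [apply sqrt_pos|left; apply Rinv_0_lt_compat; lra]).
  assert (E : bar th * bar p * muv * ((1 - x1) * (1 - x2)) = - th).
  { replace (bar th * bar p * muv * ((1 - x1) * (1 - x2))) with
      (bar th * bar p * muv - bar th * bar p * muv * (x1 + x2) + bar th * bar p * muv * (x1 * x2)) by ring.
    rewrite x_sum, x_prod. unfold gam, bar. ring. }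
  assert ((1 - x1) * (1 - x2) < 0).
  { destruct (Rlt_or_le ((1 - x1) * (1 - x2)) 0); auto.
    assert (0 <= bar th * bar p * muv * ((1 - x1) * (1 - x2))) by (apply Rmult_le_pos; lra). lra. }
  nra.
Qed.

Lemma x2_pos : 0 < x2.
Proof. pose proof x_order. pose proof x_prod_pos. nra. Qed.

Lemma al_lt : p * (1 - mub) < (1 - p) * mub.
Proof. pose proof pmb_pos. pose proof al_def. unfold bar in *.
  assert (al * ((1-p)*mub) < 1 * ((1-p)*mub)) by (apply Rmult_lt_compat_r; lra). lra. Qed.

Ltac nzs := pose proof al_lt; pose proof x_order; pose proof x2_pos; pose proof pmb_pos; pose proof al_pos;
  pose proof al_def; pose proof x_prod_pos;
  let h := fresh in (assert (h := dx2); unfold bar in h; apply Rdichotomy in h);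
  let h := fresh in (assert (h := hDelta); apply Rdichotomy in h);
   repeat split; try apply al_ne1; try apply al_ne0; try apply pmb_ne0;
  try apply x1_ne1; try apply x2_ne1; try apply dx1; try apply dx2; try exact hDelta;
  unfold bar in *; try lra; try nra.

Lemma V1c c : A2 c + B2 c * al ^ 1 + C1 c * x1 ^ 1 + D1 c * x2 ^ 1 = c.
Proof. unfold tA2, tB2; cbv zeta. pose proof pmb_pos. pose proof al_pos. pose proof al_ne1. pose proof al_ne0. unfold alpha, bar in *. field. nzs. Qed.

Lemma pow_S' x k : x ^ S k = x * x ^ k.
Proof. reflexivity. Qed.

Lemma afun_root x : Qf x = 0 -> afun p muv th x = bar th * (p * bar muv - bar p * muv * x).
Proof. intros H. unfold Qf in H. unfold afun. unfold gam in H. unfold bar in *. lra. Qed.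

Lemma DeltaE : DeltaQ p muv th N0 = bar th *
  ((p * bar muv - bar p * muv * x2) * bfun p muv th N0 x1 - (p * bar muv - bar p * muv * x1) * bfun p muv th N0 x2).
Proof. unfold DeltaQ. rewrite (afun_root _ Q1), (afun_root _ Q2). ring. Qed.

Lemma key10 c : p * bar muv * (A1 c + B1 c) - bar p * muv * (A1 c * x1 + B1 c * x2) = bar p * mub * c.
Proof.
  unfold tA1, tB1; cbv zeta. pose proof hDelta as HD. rewrite DeltaE in *.
  set (b1 := bfun p muv th N0 x1) in *. set (b2 := bfun p muv th N0 x2) in *.
  field. split; [intro E; apply HD; rewrite E; ring|unfold bar; lra].
Qed.

Lemma powN0 x : x ^ N0 = x * x ^ (N0 - 1).
Proof. replace N0 with (S (N0 - 1)) at 1 by lia. reflexivity. Qed.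

Lemma den_pos : 0 < (1-p)*p*(x1+x2) + ((p + (1-p)*(x1*x2)) - p*((p+(1-p)*(x1*x2)) - p) - (1-p)*p).
Proof.
  pose proof hmu_sub as Hm. pose proof x_prod_pos. pose proof x_sum as S.
  assert (E2 : bar th * (bar p * muv * (x1+x2) + s_nu p muv) = 1).
  { replace (bar th * (bar p * muv * (x1+x2) + s_nu p muv)) with (bar th * bar p * muv * (x1+x2) + bar th * s_nu p muv) by ring.
    rewrite S. unfold gam, s_nu, bar. ring. }
  assert (P2 : 0 < bar p * muv * (x1+x2) + s_nu p muv).
  { destruct (Rlt_or_le 0 (bar p * muv * (x1+x2) + s_nu p muv)); auto.
    set (X := bar p * muv * (x1+x2) + s_nu p muv) in *.
    assert (0 <= bar th) by (unfold bar; lra).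
    assert (bar th * X <= 0) by nra. lra. }
  clear S E2.
  set (X1 := x1star p muv th) in *. set (X2 := x2star p muv th) in *. clearbody X1 X2.
  set (d := p + (1-p)*(X1*X2)) in *.
  assert (dpos : 0 < d) by (unfold d; nra).
  assert (md : muv * d = p) by (rewrite Hm; unfold d, bar; field; unfold bar in *; nra).
  assert (E : (1-p)*p*(X1+X2) + (d - p*(d - p) - (1-p)*p) = d * (bar p * muv * (X1+X2) + s_nu p muv)).
  { unfold s_nu, bar. rewrite <- md. ring. }
  rewrite E. apply Rmult_lt_0_compat; auto.
Qed.

Lemma cf_LN00 c : CF c N0 0%nat = p * bar th * bar muv * CF c (N0-1)%nat 0%nat + bar th * sv * CF c N0 0%nat
   + bar th * muv * CF c (N0+1)%nat 0%nat.
Proof.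
    pose proof pmb_pos. pose proof al_pos. pose proof al_def.
    rewrite (cfn0 c N0), (cfn0 c (N0-1)), cfN010 by lia.
    unfold tA1, tB1, bfun; cbv zeta. rewrite !(powN0 x1), !(powN0 x2).
    set (Y1 := x1 ^ (N0 - 1)). set (Y2 := x2 ^ (N0 - 1)). set (D := DeltaQ p muv th N0).
    unfold kappa, s_nu, bar. field. nzs.
Qed.

Lemma NA_simpl c : bar p * mub * A2 c * (1 - al) =
  bar p * mub * bar th * c + th * (A1 c * (x1 / (x1 - 1)) + B1 c * (x2 / (x2 - 1))).
Proof.
  pose proof pmb_pos. pose proof al_ne1.
  assert (L : forall X, bar p * mub * (X / (bar p * mub * (1 - al))) * (1 - al) = X) by (intros; field; nzs).
  unfold tA2; cbv zeta. rewrite L. clear L.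
  unfold tC1, tD1; cbv zeta. set (a := A1 c). set (b := B1 c).
  unfold alpha, bar. field. nzs.
Qed.

Lemma xfrac x : Qf x = 0 -> x - 1 <> 0 -> th * (x / (x - 1)) = bar th * (bar p * muv * x - p * bar muv).
Proof.
  intros HQ H1.
  assert (E : bar th * (bar p * muv * x - p * bar muv) * (x - 1) = Qf x + th * x)
    by (unfold Qf, gam, bar; ring).
  rewrite HQ in E. apply (Rmult_eq_reg_r (x - 1)); auto.
  rewrite E. field. auto.
Qed.

Lemma Tclaim x Y : Qf x = 0 -> x - 1 <> 0 ->
  th * (x * Y * (p * bar th * bar muv / (1 - bar th * bar muv) + x / (x - 1))) =
  x * Y * (1 - bar th * sv) - p * bar th * bar muv * Y - bar th * muv * (p * bar th * bar muv / (1 - bar th * bar muv)) * (x * Y).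
Proof.
  intros HQ H1.
  assert (nz1 : 1 - bar th * bar muv <> 0) by (unfold bar; nra).
  replace (th * (x * Y * (p * bar th * bar muv / (1 - bar th * bar muv) + x / (x - 1))))
    with (x * Y * (th * (p * bar th * bar muv / (1 - bar th * bar muv))) + x * Y * (th * (x / (x - 1)))) by ring.
  rewrite (xfrac x HQ H1).
  match goal with |- ?L = ?R => assert (E : L - R = Y * Qf x) end.
  { unfold Qf, gam, s_nu, bar in *. field. auto. }
  rewrite HQ in E. lra.
Qed.

Lemma NAkernel c :
  bar p * mub * A2 c * (1 - al) = th * (A1 c * x1 ^ N0 * (p * bar th * bar muv / (1 - bar th * bar muv) + x1 / (x1 - 1))
     + B1 c * x2 ^ N0 * (p * bar th * bar muv / (1 - bar th * bar muv) + x2 / (x2 - 1))).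
Proof.
  rewrite NA_simpl.
  pose proof (key10 c) as K.
  pose proof (cf_LN00 c) as L.
  rewrite (cfn0 c N0), (cfn0 c (N0-1)), cfN010 in L by lia.
  rewrite !(powN0 x1), !(powN0 x2) in *.
  pose proof (Tclaim x1 (x1 ^ (N0 - 1)) Q1 x1_ne1) as T1.
  pose proof (Tclaim x2 (x2 ^ (N0 - 1)) Q2 x2_ne1) as T2.
  pose proof (xfrac x1 Q1 x1_ne1) as F1. pose proof (xfrac x2 Q2 x2_ne1) as F2.
  set (Y1 := x1 ^ (N0 - 1)) in *. set (Y2 := x2 ^ (N0 - 1)) in *.
  set (a := A1 c) in *. set (b := B1 c) in *.
  set (K' := p * bar th * bar muv / (1 - bar th * bar muv)) in *.
  set (f1 := x1 / (x1 - 1)) in *. set (f2 := x2 / (x2 - 1)) in *.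
  transitivity 0.
  - replace (bar p * mub * bar th * c + th * (a * f1 + b * f2)) with
      (bar p * mub * bar th * c + a * (th * f1) + b * (th * f2)) by ring.
    rewrite F1, F2.
    match type of K with ?KL = _ => transitivity (bar th * (bar p * mub * c - KL)) end; [ring|].
    rewrite K. ring.
  - replace (th * (a * (x1 * Y1) * (K' + f1) + b * (x2 * Y2) * (K' + f2)))
      with (a * (th * (x1 * Y1 * (K' + f1))) + b * (th * (x2 * Y2 * (K' + f2)))) by ring.
    rewrite T1, T2. lra.
Qed.

Lemma Loc_CF c : Loc p mub muv th N0 N1 (CF c).
Proof.
  pose proof pmb_pos. pose proof al_pos. pose proof al_def.
  constructor.
  -
    rewrite cf00, (cfn0 c 1) by lia. rewrite (cfn1 c 1) by lia. rewrite V1c.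
    unfold bar. field. nzs.
  -
    rewrite cf00, (cfn0 c 1), (cfn0 c 2) by lia.
    pose proof (key10 c) as K. pose proof Q1 as Q1'. pose proof Q2 as Q2'.
    match goal with |- ?L = ?R => assert (E : L - R = bar th * (p * bar muv * (A1 c + B1 c) - bar p * muv * (A1 c * x1 + B1 c * x2) - bar p * mub * c) - (A1 c * Qf x1 + B1 c * Qf x2))
      by (unfold Qf, gam, s_nu, bar; field; lra) end.
    rewrite K, Q1', Q2' in E. lra.
  -
    intros m Hm. rewrite !cfn0 by lia.
    destruct m as [|k]; [lia|]. replace (S k - 1)%nat with k by lia.
    replace (S k + 1)%nat with (S (S k)) by lia. rewrite !pow_S'.
    match goal with |- ?L = ?R => assert (E: L - R = -(A1 c * x1^k * Qf x1 + B1 c * x2^k * Qf x2))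
      by (unfold Qf, gam, s_nu, bar; ring) end.
    rewrite Q1, Q2 in E. lra.
  - apply cf_LN00.
  - rewrite cfN010, cfn0 by lia. unfold bar. field. nzs.
  -
    rewrite cf00, (cfn0 c 1), (cfn0 c 2), (cfn1 c 1), (cfn1 c 2) by lia.
    unfold tA2, tB2; cbv zeta. unfold alpha, s_nu, s_b, bar. field. nzs.
  -
    intros m Hm. rewrite !cfn0, !cfn1 by lia.
    destruct m as [|k]; [lia|]. replace (S k - 1)%nat with k by lia.
    replace (S k + 1)%nat with (S (S k)) by lia. rewrite !pow_S'.
    set (z1 := x1 ^ k). set (z2 := x2 ^ k). set (z3 := al ^ k).
    unfold tC1, tD1; cbv zeta.
    set (a := A1 c). set (b := B1 c). set (a2 := A2 c). set (b2 := B2 c).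
    unfold alpha, s_nu, s_b, bar. field. nzs.
  -
    rewrite (cfn1 c N0), (cfn0 c (N0-1)), (cfn0 c N0), cfN010, (cfn1 c (N0-1)), (cfm1 c (N0+1)) by lia.
    replace (N0 + 1 - N0 - 1)%nat with 0%nat by lia.
    pose proof (NAkernel c) as R.
    unfold piN0p1_1, tC1, tD1; cbv zeta.
    rewrite !(powN0 x1), !(powN0 x2), !(powN0 al) in *.
    set (Y1 := x1 ^ (N0 - 1)) in *. set (Y2 := x2 ^ (N0 - 1)) in *. set (aY := al ^ (N0 - 1)) in *.
    set (a := A1 c) in *. set (b := B1 c) in *. set (a2 := A2 c) in *. set (b2 := B2 c) in *.
    match type of R with ?RL = ?RR => match goal with |- ?L = ?RG =>
      assert (E : L - RG = RL - RR) by (unfold alpha, s_nu, s_b, bar; field; nzs) end end.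
    lra.
  -
    rewrite (cfm1 c (N0+1)), (cfm1 c (N0+2)), (cfn0 c N0), cfN010, (cfn1 c N0) by lia.
    replace (N0 + 1 - N0 - 1)%nat with 0%nat by lia. replace (N0 + 2 - N0 - 1)%nat with 1%nat by lia.
    unfold piN0p1_1; cbv zeta.
    set (X1 := x1 ^ N0). set (X2 := x2 ^ N0). set (aN := al ^ N0).
    set (a := A1 c). set (b := B1 c). set (a2 := A2 c). set (b2 := B2 c). set (c1 := C1 c). set (d1 := D1 c).
    unfold alpha, s_nu, s_b, bar. field. nzs.
  - intros m Hm. rewrite !cfm1 by lia.
    replace (m - N0 - 1)%nat with (S (m - N0 - 2)) by lia.
    replace (m - 1 - N0 - 1)%nat with (m - N0 - 2)%nat by lia.
    replace (m + 1 - N0 - 1)%nat with (S (S (m - N0 - 2))) by lia.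
    rewrite !pow_S'. set (z := al ^ (m - N0 - 2)). set (P := P1 c). unfold s_b, alpha, bar. field. nzs.
  -
    rewrite (cfm1 c N1), (cfm1 c (N1-1)), cfN111 by lia.
    remember (N1 - N0 - 2)%nat as k eqn:Hk.
    replace (N1 - N0 - 1)%nat with (S k) by lia.
    replace (N1 - 1 - N0 - 1)%nat with k by lia.
    replace (N1 - N0)%nat with (S (S k)) by lia.
    rewrite !pow_S'. set (z := al ^ k). set (P := P1 c). unfold s_b, alpha, bar. field. nzs.
  -
    rewrite (cfm1 c N1), cfN111 by lia.
    remember (N1 - N0 - 2)%nat as k eqn:Hk.
    replace (N1 - N0 - 1)%nat with (S k) by lia.
    replace (N1 - N0)%nat with (S (S k)) by lia.
    rewrite !pow_S'. set (z := al ^ k). set (P := P1 c). unfold s_b, alpha, bar. field. nzs.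
Qed.
End Alg.


Lemma sumseq_nonneg a L g : (forall n, (a <= n < a + L)%nat -> 0 <= g n) -> 0 <= sumseq a L g.
Proof. revert a; induction L; intros a H; [unfold sumseq; simpl; lra|].
  rewrite sumseq_S. assert (0 <= g a) by (apply H; lia).
  assert (0 <= sumseq (S a) L g) by (apply IHL; intros; apply H; lia). lra. Qed.

Lemma sum_omega_ext_on N0 N1 f g : (forall n j, inOmega N0 N1 n j -> f n j = g n j) ->
  sum_omega N0 N1 f = sum_omega N0 N1 g.
Proof. intros H. rewrite !sum_omega_split.
  rewrite (sumseq_ext 0 (N0+2) (fun n => f n 0%nat) (fun n => g n 0%nat)) by (intros; apply H; left; lia).
  rewrite (sumseq_ext 1 (N1+1) (fun n => f n 1%nat) (fun n => g n 1%nat)) by (intros; apply H; right; lia).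
  reflexivity. Qed.

Lemma sum_omega_scal N0 N1 k f : sum_omega N0 N1 (fun n j => k * f n j) = k * sum_omega N0 N1 f.
Proof. rewrite !sum_omega_split. rewrite !sumseq_scal. ring. Qed.

Lemma sum_omega_ge11 N0 N1 f : (forall n j, inOmega N0 N1 n j -> 0 <= f n j) ->
  f 1%nat 1%nat <= sum_omega N0 N1 f.
Proof. intros H. rewrite sum_omega_split.
  assert (0 <= sumseq 0 (N0+2) (fun n => f n 0%nat)) by (apply sumseq_nonneg; intros; apply H; left; lia).
  replace (N1 + 1)%nat with (S N1) by lia. rewrite sumseq_S.
  assert (0 <= sumseq 2 N1 (fun n => f n 1%nat)) by (apply sumseq_nonneg; intros; apply H; right; lia).
  lra. Qed.

Section Fin.
Variables (p mub muv th : R) (N0 N1 : nat).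
Hypothesis (hN0 : (2 <= N0)%nat) (hN1 : (N0 + 2 <= N1)%nat).
Hypothesis (hp : 0 < p < 1) (hmub : 0 < mub < 1) (hmuv : 0 < muv < 1) (hth : 0 < th < 1).
Hypothesis (halpha : alpha p mub < 1) (hDelta : DeltaQ p muv th N0 <> 0)
  (hx1 : alpha p mub <> x1star p muv th) (hx2 : alpha p mub <> x2star p muv th).

Local Notation CF c := (closed_form p mub muv th N0 c N1).

Lemma tA1_lin c : tA1 p mub muv th N0 c = c * tA1 p mub muv th N0 1.
Proof. unfold tA1; cbv zeta. unfold Rdiv; unfold Rdiv; ring. Qed.
Lemma tB1_lin c : tB1 p mub muv th N0 c = c * tB1 p mub muv th N0 1.
Proof. unfold tB1; cbv zeta; unfold Rdiv; ring. Qed.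
Lemma tC1_lin c : tC1 p mub muv th N0 c = c * tC1 p mub muv th N0 1.
Proof. unfold tC1; cbv zeta; rewrite (tA1_lin c). unfold Rdiv; unfold Rdiv; ring. Qed.
Lemma tD1_lin c : tD1 p mub muv th N0 c = c * tD1 p mub muv th N0 1.
Proof. unfold tD1; cbv zeta; rewrite (tB1_lin c); unfold Rdiv; ring. Qed.
Lemma tA2_lin c : tA2 p mub muv th N0 c = c * tA2 p mub muv th N0 1.
Proof. unfold tA2; cbv zeta; rewrite (tA1_lin c), (tB1_lin c), (tC1_lin c), (tD1_lin c); unfold Rdiv; ring. Qed.
Lemma tB2_lin c : tB2 p mub muv th N0 c = c * tB2 p mub muv th N0 1.
Proof. unfold tB2; cbv zeta; rewrite (tA1_lin c), (tB1_lin c), (tC1_lin c), (tD1_lin c); unfold Rdiv; ring. Qed.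
Lemma P1_lin c : piN0p1_1 p mub muv th N0 c = c * piN0p1_1 p mub muv th N0 1.
Proof. unfold piN0p1_1; cbv zeta;
  rewrite (tA1_lin c), (tB1_lin c), (tC1_lin c), (tD1_lin c), (tA2_lin c), (tB2_lin c); unfold Rdiv; ring. Qed.

Lemma CF_lin c n j : CF c n j = c * CF 1 n j.
Proof.
  unfold closed_form; cbv zeta.
  rewrite (tA1_lin c), (tB1_lin c), (tC1_lin c), (tD1_lin c), (tA2_lin c), (tB2_lin c), (P1_lin c).
  repeat match goal with |- context [if ?b then _ else _] => destruct b end; ring.
Qed.

Lemma CF11 c : CF c 1%nat 1%nat = c.
Proof. rewrite (cfn1 p mub muv th N0 N1) by lia. apply (V1c p mub muv th N0); auto. Qed.

Lemma main_exists : exists pi : nat -> nat -> R,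
    stationary p mub muv th N0 N1 pi /\
    (forall pi' : nat -> nat -> R, stationary p mub muv th N0 N1 pi' ->
       forall n j, inOmega N0 N1 n j -> pi' n j = pi n j) /\
    (forall n j, inOmega N0 N1 n j ->
       pi n j = closed_form p mub muv th N0 (pi 1%nat 1%nat) N1 n j).
Proof.
  set (z := CF 1).
  assert (Lz : Loc p mub muv th N0 N1 z) by (apply (Loc_CF p mub muv th N0 N1); auto).
  assert (z11 : z 1%nat 1%nat = 1) by (apply CF11).
  assert (zpos : 0 <= z (N0+1)%nat 0%nat).
  { destruct (Rle_or_lt 0 (z (N0+1)%nat 0%nat)) as [|Hneg]; auto. exfalso.
    pose proof (Loc_lin p mub muv th N0 N1 (-1) 0 z z Lz Lz) as Lw.
    pose proof (loc_nonneg p mub muv th N0 N1 hN0 hN1 hp hmub hmuv hth _ Lw ltac:(cbv beta; lra) 1%nat 1%nat ltac:(right; lia)).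
    cbv beta in *. lra. }
  assert (znz : z (N0+1)%nat 0%nat <> 0).
  { intro E. pose proof (loc_zero p mub muv th N0 N1 hN0 hN1 hp hmub hmuv hth _ Lz E 1%nat 1%nat ltac:(right; lia)). lra. }
  assert (znn : forall n j, inOmega N0 N1 n j -> 0 <= z n j)
    by (apply (loc_nonneg p mub muv th N0 N1 hN0 hN1 hp hmub hmuv hth _ Lz zpos)).
  set (S := sum_omega N0 N1 z).
  assert (Spos : 1 <= S) by (unfold S; rewrite <- z11; apply sum_omega_ge11; auto).
  exists (CF (1 / S)).
  assert (Hlin : forall n j, CF (1/S) n j = 1/S * z n j) by (intros; apply CF_lin).
  assert (Lpi : Loc p mub muv th N0 N1 (CF (1/S))) by (apply (Loc_CF p mub muv th N0 N1); auto).
  split; [|split].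
  - split; [|split].
    + intros n j Hnj. rewrite Hlin. apply Rmult_le_pos; [|auto].
      unfold Rdiv; rewrite Rmult_1_l; left; apply Rinv_0_lt_compat; lra.
    + rewrite (sum_omega_ext_on N0 N1 _ (fun n j => 1/S * z n j)) by (intros; apply Hlin).
      rewrite sum_omega_scal. fold S. field. lra.
    + apply (stat_of_loc p mub muv th N0 N1 hN0 hN1); auto.
  - intros pi' [Hnn [Hsum Hbal]] n j Hnj.
    assert (Lp : Loc p mub muv th N0 N1 pi') by (apply (loc_of_stat p mub muv th N0 N1 hN0 hN1); auto).
    set (t := pi' (N0+1)%nat 0%nat / z (N0+1)%nat 0%nat).
    pose proof (Loc_lin p mub muv th N0 N1 1 (-t) pi' z Lp Lz) as Lw.
    assert (W : forall n j, inOmega N0 N1 n j -> pi' n j = t * z n j).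
    { intros n0 j0 H0.
      pose proof (loc_zero p mub muv th N0 N1 hN0 hN1 hp hmub hmuv hth _ Lw
         ltac:(cbv beta; unfold t; field; auto) n0 j0 H0). cbv beta in *. lra. }
    assert (T1 : t = 1 / S).
    { rewrite (sum_omega_ext_on N0 N1 _ (fun n j => t * z n j)) in Hsum by auto.
      rewrite sum_omega_scal in Hsum. fold S in Hsum. field_simplify; [|lra].
      rewrite <- Hsum. field. lra. }
    rewrite W, Hlin, T1 by auto. reflexivity.
  - intros n j _. rewrite CF11. reflexivity.
Qed.

End Fin.

Theorem theorem3p1 (p mub muv th : R) (N0 N1 : nat)
  (hp : 0 < p < 1) (hmub : 0 < mub < 1) (hmuv : 0 < muv < 1) (hth : 0 < th < 1)
  (hN0 : (2 <= N0)%nat) (hN1 : (N0 + 2 <= N1)%nat)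
  (halpha : alpha p mub < 1)
  (hDelta : DeltaQ p muv th N0 <> 0)
  (hx1 : alpha p mub <> x1star p muv th)
  (hx2 : alpha p mub <> x2star p muv th) :
  exists pi : nat -> nat -> R,
    stationary p mub muv th N0 N1 pi /\
    (forall pi' : nat -> nat -> R, stationary p mub muv th N0 N1 pi' ->
       forall n j, inOmega N0 N1 n j -> pi' n j = pi n j) /\
    (forall n j, inOmega N0 N1 n j ->
       pi n j = closed_form p mub muv th N0 (pi 1%nat 1%nat) N1 n j).
Proof.
  apply main_exists; auto.
Qed.
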